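(* Let $P$ be a finite poset and $J$ a connected, nonprincipal order ideal of $P$. Then $J$ is nearly principal if and only if (a) $J$ has exactly two maximal elements $j_1,j_2$, and (b) for every common lower bound $\ell<_Pj_1,j_2$, the open intervals $]\ell,j_1[$ and $]\ell,j_2[$ coincide.
   Context: An order ideal of $P$ is a downward-closed subset; it is connected if it is nonempty and its induced Hasse diagram is connected, and principal if it equals $P_{\le p}=\{q:q\le_Pp\}$ for some $p$. Two connected order ideals intersect nontrivially if they are neither disjoint nor nested. A connected nonprincipal order ideal $J$ is nearly principal if there is exactly one unordered pair $\{J_1,J_2\}$ of connected order ideals intersecting nontrivially with $J_1\cup J_2=J$. The open interval $]\ell,j[=\{p:\ell<_Pp<_Pj\}$. *)

(* Defs.v *)
From mathcomp Require Import all_boot all_order.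
Set Implicit Arguments. Unset Strict Implicit. Unset Printing Implicit Defensive.
Import Order.Theory.
Local Open Scope order_scope.

Section Defs.
Context {d : Order.disp_t} {P : finPOrderType d}.

Definition covers (x y : P) : bool :=
  (x < y) && [forall z : P, ~~ ((x < z) && (z < y))].

(* edge relation of the Hasse diagram of P induced on J (undirected) *)
Definition hasse_in (J : {set P}) : rel P :=
  fun x y => [&& x \in J, y \in J & covers x y || covers y x].

Definition order_ideal (J : {set P}) : Prop :=
  forall x y : P, y \in J -> x <= y -> x \in J.

Definition connected_set (J : {set P}) : Prop :=
  J != set0 /\ forall x y, x \in J -> y \in J -> connect (hasse_in J) x y.

Definition connected_ideal (J : {set P}) : Prop :=
  order_ideal J /\ connected_set J.

Definition principal_ideal (J : {set P}) : Prop :=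
  exists p : P, J = [set q | q <= p].

Definition intersect_nontrivially (J1 J2 : {set P}) : Prop :=
  J1 :&: J2 != set0 /\ ~~ (J1 \subset J2) /\ ~~ (J2 \subset J1).

Definition good_pair (J J1 J2 : {set P}) : Prop :=
  connected_ideal J1 /\ connected_ideal J2 /\
  intersect_nontrivially J1 J2 /\ J1 :|: J2 = J.

(* exactly one unordered pair {J1,J2} *)
Definition nearly_principal (J : {set P}) : Prop :=
  connected_ideal J /\ ~ principal_ideal J /\
  exists J1 J2, good_pair J J1 J2 /\
    forall K1 K2, good_pair J K1 K2 ->
      (K1 = J1 /\ K2 = J2) \/ (K1 = J2 /\ K2 = J1).

Definition maximal_in (J : {set P}) (j : P) : Prop :=
  j \in J /\ forall x, x \in J -> j <= x -> x = j.

End Defs.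

(* Main.v *)
Require Import Defs.
From mathcomp Require Import all_boot all_order.
Import Order.Theory.
Set Implicit Arguments. Unset Strict Implicit.
Local Open Scope order_scope.

Section Aux.
Context {d : Order.disp_t} {P : finPOrderType d}.
Implicit Types (K A B J S T M : {set P}) (x y z p : P).

Definition dn p : {set P} := [set q | q <= p].

Lemma in_dn p q : (q \in dn p) = (q <= p).
Proof. by rewrite inE. Qed.

Lemma hasse_sym K : symmetric (hasse_in K).
Proof.
move=> x y; rewrite /hasse_in; apply/idP/idP => /and3P[a b c];
  by rewrite a b orbC c.
Qed.

Lemma cover_exists x p : x < p -> exists y, covers x y /\ y <= p.
Proof.
move=> xp.
pose S := [set z | (x < z) && (z <= p)].
have pS : p \in S by rewrite inE xp lexx.
case: (arg_minnP (fun z => #|dn z|) pS) => y.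
move=> yS ymin; have : y \in S by []; rewrite inE => /andP[xy yp].
exists y; split => //.
rewrite /covers xy /=; apply/forallP => w; apply/negP => /andP[xw wy].
have : w \in S by rewrite inE xw (le_trans (ltW wy) yp).
move=> /ymin.
apply/negP; rewrite -ltnNge; apply: proper_card; apply/properP; split.
  by apply/subsetP => q; rewrite !in_dn => qw; apply: le_trans qw (ltW wy).
exists y; first by rewrite in_dn.
by rewrite in_dn; apply/negP => yw; have := lt_le_trans wy yw; rewrite ltxx.
Qed.

Lemma connect_below K x y : order_ideal K -> y \in K -> x <= y ->
  connect (hasse_in K) x y.
Proof.
move=> idK yK.
move: {2}#|[set z | (x < z) && (z <= y)]| (leqnn #|[set z | (x < z) && (z <= y)]|) => n.
elim: n x => [|n IH] x.
  rewrite leqn0 => /eqP/cards0_eq S0; rewrite le_eqVlt => /orP[/eqP->|xy].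
    exact: connect0.
  by have := in_set0 y; rewrite -S0 inE xy lexx.
move=> hn; rewrite le_eqVlt => /orP[/eqP->|xy]; first exact: connect0.
have [w [cw wy]] := cover_exists xy.
have xw : x < w by case/andP: cw.
apply: (@connect_trans _ _ w).
  apply: connect1; rewrite /hasse_in cw /= (idK _ _ yK (le_trans (ltW xw) wy)).
  by rewrite (idK _ _ yK wy).
apply: (IH _ _ wy); rewrite -ltnS; apply: leq_trans hn; apply: proper_card.
apply/properP; split.
  apply/subsetP => q; rewrite !inE => /andP[wq ->]; by rewrite (lt_trans xw wq).
by exists w; [rewrite inE xw wy | rewrite inE ltxx].
Qed.

Lemma connect_mono K K' x y : K \subset K' ->
  connect (hasse_in K) x y -> connect (hasse_in K') x y.
Proof.
move=> sK; apply: connect_sub => u v /and3P[uK vK c]; apply: connect1.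
by rewrite /hasse_in (subsetP sK _ uK) (subsetP sK _ vK).
Qed.

Lemma cross (e : rel P) (a : pred P) x q : path e x q -> a x -> ~~ a (last x q) ->
  exists u v, [/\ a u, ~~ a v & e u v].
Proof.
elim: q x => [|y q IH] x /=; first by move=> _ ->.
case/andP => exy pq ax; case ay : (a y).
  by apply: IH.
by move=> _; exists x, y; rewrite ay.
Qed.


Lemma meet A B : order_ideal A -> order_ideal B -> connected_set (A :|: B) ->
  forall a b, a \in A -> b \in B -> exists z, z \in A /\ z \in B.
Proof.
move=> iA iB [_ cAB] a b aA bB.
case bA : (b \in A); first by exists b.
have := cAB a b; rewrite !inE aA bB orbT => /(_ isT isT) /connectP[q pq lq].
have la : ~~ ((fun z => z \in A) (last a q)) by rewrite /= -lq bA.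
have [u [v [uA vA]]] := cross (a := fun z => z \in A) pq aA la.
case/and3P => uK vK /orP[] /andP[lt _].
  move: vK; rewrite inE (negbTE vA) /= => vB.
  by exists u; split => //; exact: iB _ _ vB (ltW lt).
by case/negP: vA; exact: iA _ _ uA (ltW lt).
Qed.

Lemma union_conn A B z : connected_set A -> connected_set B -> z \in A -> z \in B ->
  connected_set (A :|: B).
Proof.
move=> [_ cA] [_ cB] zA zB; split.
  by apply/set0Pn; exists z; rewrite inE zA.
have toz : forall x, x \in A :|: B -> connect (hasse_in (A :|: B)) x z.
  move=> x; rewrite inE => /orP[xA|xB].
    by apply: connect_mono (cA _ _ xA zA); apply: subsetUl.
  by apply: connect_mono (cB _ _ xB zB); apply: subsetUr.
move=> x y xU yU; apply: connect_trans (toz _ xU) _.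
by rewrite (sym_connect_sym (@hasse_sym _)); apply: toz.
Qed.

Lemma dn_ideal p : order_ideal (dn p).
Proof. by move=> x y; rewrite !in_dn => yp xy; apply: le_trans xy yp. Qed.

Lemma dn_conn p : connected_ideal (dn p).
Proof.
split; first exact: dn_ideal.
split; first by apply/set0Pn; exists p; rewrite in_dn.
move=> x y xp yp; have pp : p \in dn p by rewrite in_dn.
have xp' : x <= p by rewrite -in_dn.
have yp' : y <= p by rewrite -in_dn.
have h1 : connect (hasse_in (dn p)) x p := connect_below (@dn_ideal p) pp xp'.
have h2 : connect (hasse_in (dn p)) y p := connect_below (@dn_ideal p) pp yp'.
apply: connect_trans h1 _.
by rewrite (sym_connect_sym (@hasse_sym _)).
Qed.

Lemma ideal_union A B : order_ideal A -> order_ideal B -> order_ideal (A :|: B).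
Proof.
move=> iA iB x y; rewrite !inE => /orP[yA|yB] xy.
  by rewrite (iA _ _ yA xy).
by rewrite (iB _ _ yB xy) orbT.
Qed.

Lemma exists_max J x : x \in J -> exists m, maximal_in J m /\ x <= m.
Proof.
move=> xJ.
pose S := [set z | (z \in J) && (x <= z)].
have xS : x \in S by rewrite inE xJ lexx.
case: (arg_maxnP (fun z => #|dn z|) xS) => m mS mmax.
have : m \in S by []; rewrite inE => /andP[mJ xm].
exists m; split => //; split => // y yJ my.
have : y \in S by rewrite inE yJ (le_trans xm my).
move=> /mmax le.
have sub : dn m \subset dn y.
  by apply/subsetP => q; rewrite !in_dn => qm; apply: le_trans qm my.
have : dn m = dn y by by apply/eqP; rewrite eqEcard sub /=; exact: le.
move=> /setP /(_ y); rewrite !in_dn lexx => ym.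
by apply/eqP; rewrite eq_le ym my.
Qed.

Definition gen (S : {set P}) : {set P} := [set x | [exists m in S, x <= m]].

Lemma in_gen S x : (x \in gen S) = [exists m in S, x <= m].
Proof. by rewrite inE. Qed.

Lemma gen_ideal S : order_ideal (gen S).
Proof.
move=> x y; rewrite !in_gen => /exists_inP[m mS ym] xy.
by apply/exists_inP; exists m => //; apply: le_trans xy ym.
Qed.

Lemma genU S T : gen (S :|: T) = gen S :|: gen T.
Proof.
apply/setP => x; rewrite !inE; apply/exists_inP/orP.
  by case=> m; rewrite inE => /orP[mS|mT] xm; [left|right]; apply/exists_inP; exists m.
by case=> /exists_inP[m mS xm]; exists m => //; rewrite inE mS ?orbT.
Qed.

Lemma gen1 t : gen [set t] = dn t.
Proof.
apply/setP => x; rewrite !inE; apply/exists_inP/idP.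
  by case=> m; rewrite inE => /eqP->.
by move=> xt; exists t; rewrite ?inE.
Qed.

Lemma gen_mem (S : {set P}) (m : P) : m \in S -> m \in gen S.
Proof. by move=> mS; rewrite in_gen; apply/exists_inP; exists m. Qed.

Lemma gen_sub S T : S \subset T -> gen S \subset gen T.
Proof.
move=> sST; apply/subsetP => x; rewrite !in_gen => /exists_inP[m mS xm].
by apply/exists_inP; exists m => //; apply: (subsetP sST).
Qed.

Lemma noncut M (t0 : P) : forall S, S \subset M -> t0 \in S -> S != M ->
  connected_set (gen M) -> connected_set (gen S) ->
  exists t, [/\ t \in M, t \notin S & connected_set (gen (M :\ t))].
Proof.
move=> S0; move: {2}#|M :\: S0| (leqnn #|M :\: S0|) => n.
elim: n S0 => [|n IH] S.
  rewrite leqn0 => /eqP/cards0_eq MS0 sSM _ nSM.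
  by case/negP: nSM; rewrite eqEsubset sSM /= -setD_eq0 MS0.
move=> hn sSM tS nSM cM cS.
have [b bM bS] : exists2 b, b \in M & b \notin S.
  have : S \proper M by rewrite properEneq nSM sSM.
  by case/properP => _ [x xM xS]; exists x.
have eM : S :|: (M :\: S) = M.
  apply/setP => x; rewrite !inE; case xS: (x \in S) => //=.
  by rewrite (subsetP sSM _ xS).
have bR : b \in M :\: S by rewrite inE bS bM.
have cU : connected_set (gen S :|: gen (M :\: S)) by rewrite -genU eM.
have [z [zS zR]] := meet (@gen_ideal S) (@gen_ideal (M :\: S)) cU (gen_mem tS) (gen_mem bR).
rewrite in_gen in zR; case/exists_inP: zR => t; rewrite inE => /andP[tS' tM] zt.
have cS' : connected_set (gen (t |: S)).
  rewrite genU gen1; apply: (union_conn (z := z)) => //; first by case: (dn_conn t).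
  by rewrite in_dn.
case: (eqVneq (t |: S) M) => [eS|nS'].
  exists t; split => //.
  by rewrite -eS setU1K.
have h1 : (#|M :\: (t |: S)| <= n)%N.
  rewrite -ltnS; apply: leq_trans hn; apply: proper_card; apply/properP; split.
    by apply/subsetP => x; rewrite !inE negb_or => /andP[/andP[_ ->] ->].
  by exists t; rewrite !inE ?tS' ?tM ?eqxx.
have h2 : t |: S \subset M.
  by apply/subsetP => x; rewrite !inE => /orP[/eqP->//|]; apply: (subsetP sSM).
have h3 : t0 \in t |: S by rewrite inE tS orbT.
have [t' [t'M t'S ct']] := IH _ h1 h2 h3 nS' cM cS'.
exists t'; split => //; apply: contra t'S; rewrite inE => ->; exact: orbT.
Qed.


Lemma good_sym J K1 K2 : good_pair J K1 K2 -> good_pair J K2 K1.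
Proof.
case=> c1 [c2 [[n0 [s1 s2]] u]]; split => //; split => //; split.
  by split; rewrite // setIC.
by rewrite setUC.
Qed.

Lemma max_not_le J a b : maximal_in J a -> b \in J -> a != b -> ~~ (a <= b).
Proof.
move=> [_ ma] bJ nab; apply/negP => ab.
by have := ma _ bJ ab; move/eqP; rewrite eq_sym (negbTE nab).
Qed.

Lemma two_max J j1 j2 : connected_ideal J -> j1 != j2 ->
  (forall j, maximal_in J j <-> j = j1 \/ j = j2) ->
  J = dn j1 :|: dn j2 /\ good_pair J (dn j1) (dn j2).
Proof.
move=> [iJ cJ] n12 hm.
have m1 : maximal_in J j1 by apply/hm; left.
have m2 : maximal_in J j2 by apply/hm; right.
have eJ : J = dn j1 :|: dn j2.
  apply/setP => x; apply/idP/idP.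
    move=> xJ; have [m [mm xm]] := exists_max xJ.
    by case: (hm m).1 => // em; rewrite inE !in_dn -em xm ?orbT.
  rewrite inE !in_dn => /orP[] xj.
    by apply: iJ xj; case: m1.
  by apply: iJ xj; case: m2.
split => //.
have j1J : j1 \in J by case: m1.
have j2J : j2 \in J by case: m2.
have n1 := max_not_le m1 j2J n12.
have n21 : j2 != j1 by rewrite eq_sym.
have n2 := max_not_le m2 j1J n21.
split; first exact: dn_conn.
split; first exact: dn_conn.
split=> //; split.
  have cU : connected_set (dn j1 :|: dn j2) by rewrite -eJ.
  have d1 : j1 \in dn j1 by rewrite in_dn.
  have d2 : j2 \in dn j2 by rewrite in_dn.
  have [z [z1 z2]] := meet (@dn_ideal j1) (@dn_ideal j2) cU d1 d2.
  by apply/set0Pn; exists z; rewrite inE z1 z2.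
split.
  by apply/subsetP => /(_ j1); rewrite !in_dn lexx => /(_ isT); apply/negP.
by apply/subsetP => /(_ j2); rewrite !in_dn lexx => /(_ isT); apply/negP.
Qed.

Lemma sub_dn K a b : order_ideal K -> connected_set K -> a \in K -> b \notin K ->
  K \subset dn a :|: dn b -> ~~ (a <= b) ->
  (forall v u, v < a -> v < b -> v < u -> u < b -> u < a) -> K = dn a.
Proof.
move=> iK [_ cK] aK bK sK nab hb.
apply/setP => x; rewrite in_dn; apply/idP/idP; last by move=> xa; apply: iK aK xa.
move=> xK; apply/negPn/negP => nxa.
have /connectP[q pq lq] := cK _ _ xK aK.
have la : ~~ ((fun z => ~~ (z <= a)) (last x q)) by rewrite /= -lq lexx.
have [u [v [/= nua /negPn va]]] := cross (a := fun z => ~~ (z <= a)) pq nxa la.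
case/and3P => uK vK /orP[] /andP[lt _].
  by case/negP: nua; apply: le_trans (ltW lt) va.
have ub : u <= b.
  by move: (subsetP sK _ uK); rewrite inE !in_dn (negbTE nua).
have ub' : u < b.
  rewrite lt_neqAle ub andbT; apply/eqP => eub; by rewrite -eub uK in bK.
have va' : v < a.
  rewrite lt_neqAle va andbT; apply/eqP => eva.
  by case/negP: nab; rewrite -eva; apply: le_trans (ltW lt) ub.
by case/negP: nua; apply: ltW; apply: hb va' (lt_trans lt ub') lt ub'.
Qed.


Lemma orient J a b K1 K2 : J = dn a :|: dn b -> maximal_in J a -> maximal_in J b ->
  a != b ->
  (forall v u, v < a -> v < b -> v < u -> u < b -> u < a) ->
  (forall v u, v < b -> v < a -> v < u -> u < a -> u < b) ->
  good_pair J K1 K2 -> a \in K1 -> K1 = dn a /\ K2 = dn b.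
Proof.
move=> eJ ma mb nab hab hba [[i1 c1] [[i2 c2] [[_ [ns12 ns21]] u]]] aK1.
have aJ : a \in J by case: ma.
have bJ : b \in J by case: mb.
have cover : forall K, order_ideal K -> a \in K -> b \in K -> J \subset K.
  move=> K iK aK bK; apply/subsetP => x; rewrite eJ inE !in_dn => /orP[] xl.
    exact: iK aK xl.
  exact: iK bK xl.
have bK1 : b \notin K1.
  apply/negP => bK1; case/negP: ns21; apply: subset_trans (cover _ i1 aK1 bK1).
  by rewrite -u subsetUr.
have bK2 : b \in K2.
  by move: bJ; rewrite -u inE (negbTE bK1).
have aK2 : a \notin K2.
  apply/negP => aK2; case/negP: ns12; apply: subset_trans (cover _ i2 aK2 bK2).
  by rewrite -u subsetUl.
have nba : b != a by rewrite eq_sym.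
split.
  apply: sub_dn i1 c1 aK1 bK1 _ (max_not_le ma bJ nab) hab.
  by rewrite -eJ -u subsetUl.
apply: sub_dn i2 c2 bK2 aK2 _ (max_not_le mb aJ nba) hba.
by rewrite setUC -eJ -u subsetUr.
Qed.

Lemma good_t J M t : connected_set J -> J = gen M ->
  (forall m, m \in M -> maximal_in J m) -> t \in M ->
  (exists2 m, m \in M & m != t) -> connected_set (gen (M :\ t)) ->
  good_pair J (dn t) (gen (M :\ t)).
Proof.
move=> cJ eJ hM tM [m mM mt] cR.
have eU : dn t :|: gen (M :\ t) = J by rewrite -gen1 -genU setD1K.
have mR : m \in M :\ t by rewrite !inE mt mM.
split; first exact: dn_conn.
split; first by split => //; apply: gen_ideal.
split=> //; split.
  have d1 : t \in dn t by rewrite in_dn.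
  have cU : connected_set (dn t :|: gen (M :\ t)) by rewrite eU.
  have [z [z1 z2]] := meet (@dn_ideal t) (@gen_ideal (M :\ t)) cU d1 (gen_mem mR).
  by apply/set0Pn; exists z; rewrite inE z1 z2.
split.
  apply/negP => /subsetP /(_ t); rewrite in_dn lexx in_gen => /(_ isT).
  case/exists_inP => m'; rewrite !inE => /andP[m't m'M] tm'.
  have [_ mt'] := hM _ tM.
  have m'J : m' \in J by rewrite eJ; apply: gen_mem.
  by have := mt' _ m'J tm'; move/eqP; rewrite (negbTE m't).
apply/negP => /subsetP /(_ m) /(_ (gen_mem mR)); rewrite in_dn => mt'.
have [_ mm] := hM _ mM.
have tJ : t \in J by rewrite eJ; apply: gen_mem.
by have := mm _ tJ mt'; move/eqP; rewrite eq_sym (negbTE mt).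
Qed.


Lemma fwd_b J a b J1 J2 l p : J = dn a :|: dn b -> maximal_in J a -> maximal_in J b ->
  a != b -> good_pair J (dn a) (dn b) ->
  (forall K1 K2, good_pair J K1 K2 -> (K1 = J1 /\ K2 = J2) \/ (K1 = J2 /\ K2 = J1)) ->
  l < a -> l < b -> l < p -> p < b -> p < a.
Proof.
move=> eJ ma mb nab gab U la lb lp pb.
apply/negPn/negP => npa.
have aJ : a \in J by case: ma.
have bJ : b \in J by case: mb.
have nab' := max_not_le ma bJ nab.
have nba : b != a by rewrite eq_sym.
have nba' := max_not_le mb aJ nba.
have npa' : ~~ (p <= a).
  apply/negP => pa; case/negP: npa; rewrite lt_neqAle pa andbT.
  by apply/eqP => epa; case/negP: nab'; rewrite -epa ltW.
pose K1 := dn a :|: dn p.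
have gK : good_pair J K1 (dn b).
  have lK1 : l \in dn a by rewrite in_dn ltW.
  have lK2 : l \in dn p by rewrite in_dn ltW.
  split.
    split; first by apply: ideal_union; apply: dn_ideal.
    by apply: union_conn lK1 lK2; [case: (dn_conn a) | case: (dn_conn p)].
  split; first exact: dn_conn.
  split; last first.
    rewrite eJ -setUA; congr (_ :|: _); apply/setP => x; rewrite !inE.
    apply/idP/idP => [/orP[xp|->//]|->]; last by rewrite orbT.
    by apply: le_trans xp (ltW pb).
  split.
    by apply/set0Pn; exists l; rewrite !inE ?in_dn (ltW la) (ltW lb).
  split.
    apply/negP => /subsetP /(_ a); rewrite !inE lexx /= => /(_ isT).
    by apply/negP.
  apply/negP => /subsetP /(_ b); rewrite !inE lexx /= => /(_ isT).
  case/orP => bp; first by case/negP: nba'.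
  by have := lt_le_trans pb bp; rewrite ltxx.
have pK1 : p \in K1 by rewrite !inE lexx orbT.
have aK1 : a \in K1 by rewrite !inE lexx.
have [[e1 e2]|[e1 e2]] := U _ _ gK; have [[f1 f2]|[f1 f2]] := U _ _ gab.
- by move: pK1; rewrite e1 -f1 in_dn (negbTE npa').
- by move: aK1; rewrite e1 -f2 in_dn (negbTE nab').
- by move: aK1; rewrite e1 -f2 in_dn (negbTE nab').
- by move: pK1; rewrite e1 -f1 in_dn (negbTE npa').
Qed.

End Aux.

Theorem proposition10p4 (d : Order.disp_t) (P : finPOrderType d) (J : {set P})
  (hJ : connected_ideal J) (hnp : ~ principal_ideal J) :
  nearly_principal J <->
  exists j1 j2 : P,
    [/\ j1 != j2,
        (forall j, maximal_in J j <-> (j = j1 \/ j = j2)) &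
        (forall l : P, l < j1 -> l < j2 ->
           forall p : P, (l < p < j1) = (l < p < j2))].
Proof.
split.
- case=> _ [_ [J1 [J2 [g U]]]].
  have [iJ cJ] := hJ.
  pose M := [set m | (m \in J) && [forall x, ((x \in J) && (m <= x)) ==> (x == m)]].
  have maxE : forall m, m \in M <-> maximal_in J m.
    move=> m; rewrite inE; split.
      case/andP => mJ /forallP h; split => // x xJ mx.
      by apply/eqP; have := h x; rewrite xJ mx.
    case=> mJ h; rewrite mJ; apply/forallP => x; apply/implyP => /andP[xJ mx].
    by rewrite (h _ xJ mx).
  have eJ : J = gen M.
    apply/setP => x; rewrite in_gen; apply/idP/exists_inP.
      by move=> xJ; have [m [mm xm]] := exists_max xJ; exists m => //; apply/maxE.
    by case=> m /maxE [mJ _] xm; apply: iJ mJ xm.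
  have cM : connected_set (gen M) by rewrite -eJ.
  have hM : forall m, m \in M -> maximal_in J m by move=> m /maxE.
  have [x0 x0J] : exists x, x \in J by case: cJ => /set0Pn.
  have [t0 [mt0 _]] := exists_max x0J.
  have t0M : t0 \in M by apply/maxE.
  have s0 : [set t0] \subset M by rewrite sub1set.
  have i0 : t0 \in [set t0] by rewrite inE.
  have n0 : [set t0] != M.
    apply/negP => /eqP e0; apply: hnp; exists t0.
    by rewrite eJ -e0 gen1.
  have c0 : connected_set (gen [set t0]) by rewrite gen1; case: (dn_conn t0).
  have [t1 [t1M t1n ct1]] := noncut s0 i0 n0 cM c0.
  have t10 : t1 != t0 by move: t1n; rewrite inE.
  have s1 : [set t1] \subset M by rewrite sub1set.
  have i1 : t1 \in [set t1] by rewrite inE.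
  have n1 : [set t1] != M.
    apply/negP => /eqP e1; move: t0M; rewrite -e1 inE => /eqP e.
    by rewrite e eqxx in t10.
  have c1 : connected_set (gen [set t1]) by rewrite gen1; case: (dn_conn t1).
  have [t2 [t2M t2n ct2]] := noncut s1 i1 n1 cM c1.
  have t21 : t2 != t1 by move: t2n; rewrite inE.
  have g1 : good_pair J (dn t1) (gen (M :\ t1)).
    by apply: good_t => //; exists t0; rewrite // eq_sym.
  have g2 : good_pair J (dn t2) (gen (M :\ t2)).
    by apply: good_t => //; exists t1; rewrite // eq_sym.
  have dn12 : dn t1 != dn t2.
    apply/negP => /eqP /setP /(_ t1); rewrite !in_dn lexx => e.
    have [_ m1'] := hM _ t1M; have [t2J _] := hM _ t2M.
    by have := m1' _ t2J; rewrite -e => /(_ isT) /eqP; rewrite (negbTE t21).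
  have e2 : gen (M :\ t2) = dn t1.
    have [[a1 a2]|[a1 a2]] := U _ _ g1; have [[b1 b2]|[b1 b2]] := U _ _ g2.
    - by case/negP: dn12; rewrite a1 b1.
    - by rewrite b2 a1.
    - by rewrite b2 a1.
    - by case/negP: dn12; rewrite a1 b1.
  have hm : forall j, maximal_in J j <-> j = t1 \/ j = t2.
    move=> j; split; last by case=> ->; apply: hM.
    move=> mj; case: (eqVneq j t2) => [->|jt2]; first by right.
    left; have jM : j \in M by apply/maxE.
    have : j \in gen (M :\ t2) by apply: gen_mem; rewrite in_setD1 jt2 jM.
    rewrite e2 in_dn => jt1.
    have [t1J _] := hM _ t1M.
    by have [_ mm] := mj; symmetry; apply: mm t1J jt1.
  have t12 : t1 != t2 by rewrite eq_sym.
  have [eJ2 g12] := two_max hJ t12 hm.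
  have m1 : maximal_in J t1 by apply/hm; left.
  have m2 : maximal_in J t2 by apply/hm; right.
  exists t1, t2; split => // l l1 l2 p.
  apply/idP/idP => /andP[lp pt]; rewrite lp /=.
    by apply: (fwd_b (J1 := J1) (J2 := J2) _ m2 m1 t21 (good_sym g12) U l2 l1 lp pt);
      rewrite setUC.
  exact: (fwd_b (J1 := J1) (J2 := J2) eJ2 m1 m2 t12 g12 U l1 l2 lp pt).
- case=> j1 [j2 [n12 hm hb]].
  have [eJ g] := two_max hJ n12 hm.
  have m1 : maximal_in J j1 by apply/hm; left.
  have m2 : maximal_in J j2 by apply/hm; right.
  have n21 : j2 != j1 by rewrite eq_sym.
  have hab : forall v u, v < j1 -> v < j2 -> v < u -> u < j2 -> u < j1.
    by move=> v u h1 h2 vu uj; have := hb v h1 h2 u; rewrite vu uj /= => ->.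
  have hba : forall v u, v < j2 -> v < j1 -> v < u -> u < j1 -> u < j2.
    by move=> v u h1 h2 vu uj; have := hb v h2 h1 u; rewrite vu uj /= => <-.
  split => //; split => //; exists (dn j1), (dn j2); split => // K1 K2 gK.
  have j1J : j1 \in J by case: m1.
  case: (boolP (j1 \in K1)) => jK.
    by left; apply: (orient eJ m1 m2 n12 hab hba gK jK).
  have jK2 : j1 \in K2.
    by move: j1J; case: gK => _ [_ [_ <-]]; rewrite inE (negbTE jK).
  by right; have [-> ->] := orient eJ m1 m2 n12 hab hba (good_sym gK) jK2.
Qed.
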